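(* Let $n\ge3$ and let $x^\Lambda\partial_k,x^\Theta\partial_u\in\mathcal{B}$ with $[x^\Lambda\partial_k,x^\Theta\partial_u]\ne0$. Then for every integer $i\ge-1$, \[\mathrm{lev}_i([x^\Lambda\partial_k,x^\Theta\partial_u])=\mathrm{lev}_i(x^\Lambda\partial_k)+\mathrm{lev}_i(x^\Theta\partial_u)-h_i(n-1)\] and \[\mathrm{WD}([x^\Lambda\partial_k,x^\Theta\partial_u])=\mathrm{WD}(x^\Lambda\partial_k)+\mathrm{WD}(x^\Theta\partial_u)-(n-1).\] Moreover, if $\mathrm{lev}_i(x^\Lambda\partial_k)\le i$ and $\mathrm{lev}_j(x^\Theta\partial_u)\le j$ for some $i,j\ge-1$, then \[\mathrm{WD}([x^\Lambda\partial_k,x^\Theta\partial_u])\le\min\bigl(\mathrm{WD}(x^\Lambda\partial_k),\mathrm{WD}(x^\Theta\partial_u)\bigr),\] with equality if and only if one of $x^\Lambda\partial_k$, $x^\Theta\partial_u$ equals $\partial_1$.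
   Context: Fix an integer $n\ge 3$. A partition is a sequence $\Lambda=(\lambda_j)_{j\ge1}$ of non-negative integers with finite support; $\mathrm{wt}(\Lambda)=\sum_j j\lambda_j$; $\mathrm{Part}(k)$ is the set of partitions with $\lambda_j=0$ for $j>k$. Write $x^\Lambda=\prod_j x_j^{\lambda_j}$, $\deg(x^\Lambda)=\sum_j\lambda_j$, and let $\partial_k$ be the partial derivative with respect to $x_k$. $\mathfrak{L}(n)$ is the free $\mathbb{Z}$-module with basis $\mathcal{B}=\{x^\Lambda\partial_k : 1\le k\le n,\ \Lambda\in\mathrm{Part}(k-1)\}$, a Lie ring with bracket defined on basis elements by $[x^\Lambda\partial_k,x^\Theta\partial_j]=\partial_j(x^\Lambda)x^\Theta\partial_k$ if $j<k$, $-x^\Lambda\partial_k(x^\Theta)\partial_j$ if $j>k$, $0$ if $j=k$, extended bilinearly; thus a nonzero bracket of two basis elements is $c\cdot x^\Gamma\partial_v$ for a nonzero integer $c$ and $x^\Gamma\partial_v\in\mathcal{B}$. For an integer $i\ge-1$, let $r_i\in\{1,\dots,n-1\}$ with $i\equiv r_i\pmod{n-1}$ and $h_i=\lfloor (i-1)/(n-1)\rfloor+1$. For a nonzero integer $c$ and $x^\Lambda\partial_k\in\mathcal{B}$ define $\mathrm{WD}(c\,x^\Lambda\partial_k)=\mathrm{wt}(\Lambda)-\deg(x^\Lambda)+n-k$ and $\mathrm{lev}_i(c\,x^\Lambda\partial_k)=h_i\,\mathrm{WD}(x^\Lambda\partial_k)+\deg(x^\Lambda)-1$. *)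

(* Defs.v *)
From mathcomp Require Import all_boot all_order all_algebra.
Set Implicit Arguments. Unset Strict Implicit. Unset Printing Implicit Defensive.
Import Order.TTheory GRing.Theory Num.Theory.
Local Open Scope ring_scope.

(* A partition Lambda = (lambda_j)_{j>=1} is represented by a function
   L : nat -> nat, with L j = lambda_j for j >= 1; the unused entry L 0 is
   required to be 0 so that the representation is canonical. *)
Definition mono := nat -> nat.

Definition inPart (m : nat) (L : mono) : Prop :=
  forall j : nat, ((j == 0)%N || (m < j)%N) -> L j = 0%N.

Definition is_basis (n : nat) (L : mono) (k : nat) : Prop :=
  (1 <= k <= n)%N /\ inPart k.-1 L.

Definition wt (m : nat) (L : mono) : nat := (\sum_(1 <= j < m.+1) j * L j)%N.
Definition deg (m : nat) (L : mono) : nat := (\sum_(1 <= j < m.+1) L j)%N.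

Definition WD (n : nat) (L : mono) (k : nat) : int :=
  (wt k.-1 L)%:Z - (deg k.-1 L)%:Z + n%:Z - k%:Z.

Definition h (n : nat) (i : int) : int := ((i - 1) %/ (n%:Z - 1))%Z + 1.

Definition lev (n : nat) (i : int) (L : mono) (k : nat) : int :=
  h n i * WD n L k + (deg k.-1 L)%:Z - 1.

(* Result of a bracket of two basis elements: c * x^Gamma d_v. *)
Record bres := Bres { coef : int; gam : mono; vidx : nat }.

(* [x^L d_k, x^T d_u] =
     d_u(x^L) x^T d_k          if u < k   ( = lambda_u x^(L - e_u + T) d_k )
   - x^L d_k(x^T) d_u          if u > k   ( = - theta_k x^(L + T - e_k) d_u )
     0                         if u = k *)
Definition bracket (L : mono) (k : nat) (T : mono) (u : nat) : bres :=
  if (u < k)%N then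
    Bres (L u)%:Z (fun j => (L j - (j == u) + T j)%N) k
  else if (k < u)%N then
    Bres (- (T k)%:Z) (fun j => (L j + (T j - (j == k)))%N) u
  else Bres 0 L k.

Definition is_d1 (L : mono) (k : nat) : Prop := k = 1%N /\ (forall j, L j = 0%N).

(* Main.v *)
Require Import Defs.
From mathcomp Require Import all_boot all_order all_algebra zify ring.
Import Order.TTheory GRing.Theory Num.Theory.
Local Open Scope ring_scope.

Definition S (w : nat -> nat) (m : nat) (L : mono) : nat :=
  (\sum_(1 <= j < m.+1) w j * L j)%N.

Lemma wtS m L : wt m L = S (fun j => j) m L.
Proof. by []. Qed.

Lemma degS m L : deg m L = S (fun _ => 1%N) m L.
Proof. by rewrite /deg /S; apply: eq_bigr => j _; rewrite mul1n. Qed.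

Lemma S_ext w m p L : inPart m L -> (m <= p)%N -> S w p L = S w m L.
Proof.
move=> HL Hmp; have Hm : (m.+1 <= p.+1)%N by [].
rewrite /S (@big_cat_nat _ _ _ m.+1) //=.
rewrite [X in (_ + X)%N]big1_seq ?addn0 // => j /andP[_].
rewrite mem_iota => /andP[Hj _]; rewrite HL ?muln0 //; apply/orP; right. lia.
Qed.

Lemma S_add w m A B : S w m (fun j => A j + B j)%N = (S w m A + S w m B)%N.
Proof. by rewrite /S -big_split /=; apply: eq_bigr => j _; rewrite mulnDr. Qed.

Lemma S_delta w m u : (1 <= u <= m)%N ->
  (\sum_(1 <= j < m.+1) w j * (j == u))%N = w u.
Proof.
move=> Hu.
rewrite (bigD1_seq u) /=; last by rewrite iota_uniq.
  rewrite eqxx muln1 big1 ?addn0 // => j /negbTE ->; by rewrite muln0.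
by rewrite mem_iota; lia.
Qed.

Lemma S_sub_delta w m u L : (1 <= u <= m)%N -> (0 < L u)%N ->
  (S w m (fun j => L j - (j == u)) + w u)%N = S w m L.
Proof.
move=> Hu HLu; rewrite -(@S_delta w m u Hu) /S -big_split /=.
apply: eq_bigr => j _; rewrite -mulnDr; congr (_ * _)%N.
case: eqP => [->|_]; lia.
Qed.

Lemma S_bounds m L : (S (fun _ => 1%N) m L <= S (fun j => j) m L)%N /\
   (S (fun j => j) m L <= m * S (fun _ => 1%N) m L)%N.
Proof.
split; rewrite /S.
  rewrite !big_nat; apply: leq_sum => j /andP[Hj _]; by rewrite leq_mul2r Hj orbT.
rewrite big_distrr /= !big_nat; apply: leq_sum => j /andP[_ Hj].
rewrite mulnA leq_mul2r; apply/orP; right; lia.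
Qed.
Lemma arith (q r m i W D : int) : 2 <= m -> i - 1 = q * m + r -> 0 <= r -> r < m -> -1 <= i ->
  (q + 1) * W + D - 1 <= i -> 2 <= D -> 0 <= W -> W <= m - 1.
Proof.
move=> Hm E Hr0 Hr Hi H HD HW.
have [Hq|Hq] : q <= -2 \/ -1 <= q by lia.
  have : q * m <= -2 * m by nia. lia.
have [Hq1|Hq1] : q = -1 \/ 0 <= q by lia.
  subst q. lia.
have [//|HWm] : W <= m - 1 \/ m <= W by lia.
have : (q+1) * m <= (q+1) * W by nia.
lia.
Qed.

Lemma key (n k wt D : nat) (i : int) : (3 <= n)%N -> (1 <= k <= n)%N ->
  (D <= wt)%N -> (wt <= k.-1 * D)%N -> -1 <= i ->
  h n i * (wt%:Z - D%:Z + n%:Z - k%:Z) + D%:Z - 1 <= i ->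
  wt%:Z - D%:Z + n%:Z - k%:Z <= n%:Z - 1 /\
  (wt%:Z - D%:Z + n%:Z - k%:Z = n%:Z - 1 -> k = 1%N).
Proof.
move=> Hn Hk HD Hw Hi H.
case: D HD Hw H => [|[|D]] HD Hw H.
- rewrite muln0 in Hw; lia.
- rewrite muln1 in Hw; lia.
have Hm : (n%:Z - 1) != 0 by lia.
have E := divz_eq (i - 1) (n%:Z - 1).
have Hr0 := modz_ge0 (i - 1) Hm.
have Hr := ltz_mod (i - 1) Hm.
rewrite gtr0_norm in Hr; last by lia.
move: H; rewrite /h => H.
have Hm2 : (2 <= n%:Z - 1) by lia.
have := @arith _ _ (n%:Z - 1) _ _ _ Hm2 E Hr0 Hr Hi H.
lia.
Qed.

Lemma elem n L k i : (3 <= n)%N -> is_basis n L k -> -1 <= i -> lev n i L k <= i ->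
  WD n L k <= n%:Z - 1 /\ (WD n L k = n%:Z - 1 <-> is_d1 L k).
Proof.
move=> Hn [Hk HL] Hi; rewrite /lev /WD => Hl.
have [b1 b2] := S_bounds k.-1 L; rewrite -wtS -degS in b1 b2.
have [K1 K2] := @key _ _ _ _ _ Hn Hk b1 b2 Hi Hl.
split => //; split => [/K2 Hk1 | [Hk1 HL0]].
  split => // j; apply: HL; rewrite Hk1 /=; by case: j.
subst k; rewrite /wt /deg !big_geq //; lia.
Qed.

Lemma final n L k T u (WG DG : int) : (3 <= n)%N -> is_basis n L k -> is_basis n T u ->
  WG = WD n L k + WD n T u - (n%:Z - 1) ->
  DG = (deg k.-1 L)%:Z + (deg u.-1 T)%:Z - 1 ->
  (forall i : int, -1 <= i ->
     h n i * WG + DG - 1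
     = lev n i L k + lev n i T u - h n i * (n%:Z - 1)) /\
  WG = WD n L k + WD n T u - (n%:Z - 1) /\
  (forall i j : int, -1 <= i -> -1 <= j ->
     lev n i L k <= i -> lev n j T u <= j ->
     WG <= Num.min (WD n L k) (WD n T u) /\
     (WG = Num.min (WD n L k) (WD n T u) <-> is_d1 L k \/ is_d1 T u)).
Proof.
move=> Hn BL BT EW ED; split.
  move=> i _; rewrite EW ED /lev; ring.
split => // i j Hi Hj Hli Hlj.
have [A1 A2] := @elem _ _ _ _ Hn BL Hi Hli.
have [B1 B2] := @elem _ _ _ _ Hn BT Hj Hlj.
rewrite -A2 -B2 minEle; case: ifP => Hle; split; lia.
Qed.

Theorem proposition2p3 (n : nat) (L : mono) (k : nat) (T : mono) (u : nat) :
  (3 <= n)%N -> is_basis n L k -> is_basis n T u ->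
  coef (bracket L k T u) != 0 ->
  (forall i : int, -1 <= i ->
     lev n i (gam (bracket L k T u)) (vidx (bracket L k T u))
     = lev n i L k + lev n i T u - h n i * (n%:Z - 1)) /\
  WD n (gam (bracket L k T u)) (vidx (bracket L k T u))
     = WD n L k + WD n T u - (n%:Z - 1) /\
  (forall i j : int, -1 <= i -> -1 <= j ->
     lev n i L k <= i -> lev n j T u <= j ->
     WD n (gam (bracket L k T u)) (vidx (bracket L k T u))
       <= Num.min (WD n L k) (WD n T u) /\
     (WD n (gam (bracket L k T u)) (vidx (bracket L k T u))
       = Num.min (WD n L k) (WD n T u) <-> is_d1 L k \/ is_d1 T u)).
Proof.
move=> Hn BL BT; have [Hk HL] := BL; have [Hu HT] := BT.
rewrite /bracket; case: ltnP => Huk.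
  rewrite /= => Hc.
  have HLu : (0 < L u)%N by lia.
  have Hu1 : (1 <= u <= k.-1)%N.
    case: u Huk Hu HT BT Hc HLu => [|u'] Huk Hu HT BT Hc HLu; last by lia.
    by rewrite HL in HLu.
  have E1 := S_add (fun j => j) k.-1 (fun j => L j - (j == u))%N T.
  have E2 := S_add (fun _ => 1%N) k.-1 (fun j => L j - (j == u))%N T.
  have F1 := @S_sub_delta (fun j => j) k.-1 u L Hu1 HLu.
  have F2 := @S_sub_delta (fun _ => 1%N) k.-1 u L Hu1 HLu.
  have G1 := @S_ext (fun j => j) u.-1 k.-1 T HT ltac:(lia).
  have G2 := @S_ext (fun _ => 1%N) u.-1 k.-1 T HT ltac:(lia).
  rewrite -!wtS -!degS in E1 E2 F1 F2 G1 G2.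
  apply: (@final n L k T u) => //; rewrite /WD; lia.
case: ltnP => Hku; last by move=> /= /eqP; case: eqP; [|lia].
rewrite /= => Hc.
have HTk : (0 < T k)%N by lia.
have Hk1 : (1 <= k <= u.-1)%N by lia.
have E1 := S_add (fun j => j) u.-1 L (fun j => T j - (j == k))%N.
have E2 := S_add (fun _ => 1%N) u.-1 L (fun j => T j - (j == k))%N.
have F1 := @S_sub_delta (fun j => j) u.-1 k T Hk1 HTk.
have F2 := @S_sub_delta (fun _ => 1%N) u.-1 k T Hk1 HTk.
have G1 := @S_ext (fun j => j) k.-1 u.-1 L HL ltac:(lia).
have G2 := @S_ext (fun _ => 1%N) k.-1 u.-1 L HL ltac:(lia).
rewrite -!wtS -!degS in E1 E2 F1 F2 G1 G2.
apply: (@final n L k T u) => //; rewrite /WD; lia.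
Qed.
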